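(* Let $\{c_k\}_{k\ge1}$ be i.i.d. random variables whose common distribution is absolutely continuous on $[0,1]$ with almost everywhere positive and uniformly bounded density, let $\lambda>0$ and $l_k=e^{-\lambda k}$, and let $q(n)=\lfloor\log_2(\log n)\rfloor$. Then almost surely the following holds: for every $\varepsilon>0$, for all sufficiently large $n$ and all $i\ne j$ in $\mathcal{A}_{n,q(n)}$, $\frac{l_i+l_j}{2|c_i-c_j|}<\varepsilon$.
   Context: $\mathcal{A}_n=\{n,\dots,2n-1\}$ and $\mathcal{A}_{n,q}=\mathcal{A}_n\cup\mathcal{A}_{2n}\cup\cdots\cup\mathcal{A}_{2^qn}$. *)

(* Defs.v *)
From HB Require Import structures.
From mathcomp Require Import all_boot all_order all_algebra.
From mathcomp Require Import all_classical all_reals all_analysis.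
Set Implicit Arguments. Unset Strict Implicit. Unset Printing Implicit Defensive.
Import Order.TTheory GRing.Theory Num.Theory.
Local Open Scope classical_set_scope.
Local Open Scope ring_scope.

Definition inA (n k : nat) : Prop := (n <= k < 2 * n)%N.

Definition inAq (n q k : nat) : Prop := exists m : nat, (m <= q)%N /\ inA (2 ^ m * n) k.

(* q(n) = floor(log_2(log n)); only relevant for large n where the value is >= 0 *)
Definition qn {R : realType} (n : nat) : nat :=
  Num.truncn (ln (ln (n%:R : R)) / ln 2).

Definition lk {R : realType} (lam : R) (k : nat) : R := expR (- (lam * k%:R)).

Definition mutually_independent {R : realType} {d : measure_display}
  {T : measurableType d} (P : probability T R) (X : nat -> T -> R) : Prop :=
  forall (n : nat) (B : nat -> set R), (forall i, measurable (B i)) ->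
    P (\bigcap_(i in [set i | (i < n)%N]) (X i @^-1` B i)) =
    (\prod_(i < n) P (X i @^-1` B i))%E.

Definition has_density_01 {R : realType} {d : measure_display}
  {T : measurableType d} (P : probability T R) (X : T -> R) (f : R -> R) : Prop :=
  forall B : set R, measurable B ->
    P (X @^-1` B) = (\int[lebesgue_measure]_(x in B `&` `[0%R, 1%R]) (f x)%:E)%E.

(* Main.v *)
Require Import Defs.
From HB Require Import structures.
From mathcomp Require Import all_boot all_order all_algebra.
From mathcomp Require Import all_classical all_reals all_analysis.
From mathcomp Require Import measurable_realfun.
From mathcomp Require Import lra ring zify.
Import Order.TTheory GRing.Theory Num.Theory.
Local Open Scope classical_set_scope.
Local Open Scope ring_scope.

Lemma itv_bound (R : realType) (d : measure_display) (T : measurableType d)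
  (P : probability T R) (X : T -> R) (f : R -> R) (M a b : R) :
  has_density_01 P X f -> measurable_fun setT f -> (forall x, 0 <= f x <= M) ->
  a <= b -> (P (X @^-1` `[a, b]) <= (M * (b - a))%:E)%E.
Proof.
move=> hd mf fM ab; rewrite hd; last exact: measurable_itv.
have mab : measurable (`[a, b] : set R) by exact: measurable_itv.
have mf' : measurable_fun `[a, b] (EFin \o f).
  by apply/measurable_EFinP; exact: measurable_funS mf.
apply: (le_trans (ge0_subset_integral _ _ _ _ _ _)).
- by apply: measurableI => //; exact: measurable_itv.
- exact: mab.
- exact: mf'.
- by move=> x _ /=; rewrite lee_fin; case/andP: (fM x).
- exact: subIsetl.
apply: (le_trans (ge0_le_integral _ _ _ _ (f2 := cst M%:E) _ _)) => //.
all: try by move=> x _ /=; rewrite lee_fin; case/andP: (fM x) => h1 h2; try exact: le_trans h2.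
rewrite integral_cst//= lebesgue_measure_itv/=.
case: ifPn => [_|]; first by rewrite -EFinM.
rewrite lte_fin -leNgt => ba; have -> : b = a by apply/eqP; rewrite eq_le ab ba.
by rewrite subrr mulr0 mule0.
Qed.

Lemma outside0 (R : realType) (d : measure_display) (T : measurableType d)
  (P : probability T R) (X : T -> R) (f : R -> R) :
  has_density_01 P X f -> P (X @^-1` (~` `[0%R, 1%R])) = 0%E.
Proof.
move=> hd; rewrite hd; last by apply: measurableC; exact: measurable_itv.
by rewrite setICl integral_set0.
Qed.

Lemma indep_pair (R : realType) (d : measure_display) (T : measurableType d)
  (P : probability T R) (c : nat -> T -> R) (a b : nat) (A B : set R) :
  mutually_independent P (fun k => c k.+1) -> a <> b ->
  measurable A -> measurable B ->
  P (c a.+1 @^-1` A `&` c b.+1 @^-1` B) = (P (c a.+1 @^-1` A) * P (c b.+1 @^-1` B))%E.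
Proof.
move=> hI ab mA mB.
pose n := (maxn a b).+1.
pose BB t := if t == a then A else if t == b then B else setT.
have mBB : forall t, measurable (BB t).
  by move=> t; rewrite /BB; case: ifP => _ //; case: ifP.
have := hI n BB mBB.
have han : (a < n)%N by rewrite ltnS leq_maxl.
have hbn : (b < n)%N by rewrite ltnS leq_maxr.
have -> : \bigcap_(i in [set i | (i < n)%N]) ((fun k => c k.+1) i @^-1` BB i) =
   c a.+1 @^-1` A `&` c b.+1 @^-1` B.
  apply/seteqP; split=> w /=.
  - move=> h; split.
    + by have := h a han; rewrite /BB eqxx.
    + have := h b hbn; rewrite /BB eqxx.
      by case: eqP => // ba; exfalso; apply: ab.
  - case=> hA hB t _; rewrite /BB; case: eqP => [->//|_].
    by case: eqP => [->//|_].
move=> ->.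
rewrite (bigD1 (Ordinal han)) //= (bigD1 (Ordinal hbn)) /=; last first.
  by apply/eqP => -[] /esym.
rewrite big1 ?mule1.
  rewrite /BB eqxx; case: eqP => [ba|_]; first by exfalso; apply: ab.
  by rewrite eqxx.
move=> t /andP[ta tb]; rewrite /BB.
case: eqP => [ea|_]; first by exfalso; move: ta => /eqP; apply; apply: val_inj.
case: eqP => [eb|_]; first by exfalso; move: tb => /eqP; apply; apply: val_inj.
by rewrite preimage_setT probability_setT.
Qed.

Lemma pair_bound (R : realType) (d : measure_display) (T : measurableType d)
  (P : probability T R) (c : nat -> T -> R) (f : R -> R) (M : R) (a b : nat) (del : R) :
  (forall k, measurable_fun setT (c k)) ->
  mutually_independent P (fun k => c k.+1) ->
  (forall k, (1 <= k)%N -> has_density_01 P (c k) f) ->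
  measurable_fun setT f ->
  (forall x, 0 <= f x <= M) -> a <> b -> 0 < del ->
  (P [set w | (`|c a.+1 w - c b.+1 w| <= del)%R] <=
    ((Num.truncn (del^-1)).+1%:R * ((M * del) * (M * (3 * del))))%:E)%E.
Proof.
move=> mc hI hd mf fM ab dpos.
set K := (Num.truncn (del^-1)).+1.
set S := [set w | _].
have mS : measurable S.
  have -> : S = (fun w => c a.+1 w - c b.+1 w) @^-1` `[- del, del].
    apply/seteqP; split=> w /=; rewrite in_itv /= -ler_norml //.
  rewrite -[X in measurable X]setTI.
  by apply: (measurable_funB (mc _) (mc _)) => //; exact: measurable_itv.
pose F k := if k is k'.+1 then
   c a.+1 @^-1` `[k'%:R * del, (k'.+1)%:R * del] `&`
   c b.+1 @^-1` `[(k'%:R - 1) * del, (k'%:R + 2) * del]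
  else c a.+1 @^-1` (~` `[0%R, 1%R]).
have mF : forall k, measurable (F k).
  case=> [|k] /=.
    rewrite -[X in measurable X]setTI; apply: (mc _) => //.
    by apply: measurableC; exact: measurable_itv.
  apply: measurableI.
    by rewrite -[X in measurable X]setTI; apply: (mc _) => //; exact: measurable_itv.
  by rewrite -[X in measurable X]setTI; apply: (mc _) => //; exact: measurable_itv.
have SF : S `<=` \big[setU/set0]_(k < K.+1) F k.
  rewrite -bigcup_mkord => w /= Sw.
  have [x01|xn01] := boolP (0 <= c a.+1 w <= 1); last first.
    by exists 0%N => //=; rewrite in_itv /=; apply/negP.
  set x := c a.+1 w in x01 Sw *.
  set y := c b.+1 w in Sw *.
  case/andP: x01 => x0 x1.
  have xd0 : 0 <= x / del by rewrite divr_ge0 // ltW.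
  set k := Num.truncn (x / del).
  have /andP[kl kr] := truncn_itv xd0.
  exists k.+1.
    rewrite /= ltnS /K ltnS; apply: le_truncn.
    by rewrite ler_pdivrMr // mulVf ?gt_eqF // ?mulr1.
  rewrite /= !in_itv /=.
  have kl' : k%:R * del <= x by rewrite -ler_pdivlMr.
  have kr' : x < k.+1%:R * del by rewrite -ltr_pdivrMr.
  move: Sw; rewrite /S /= ler_norml -/x -/y => /andP[h1 h2].
  rewrite -/x -/y.
  rewrite -natr1 in kr' *.
  split; apply/andP; split; lra.
have := @content_subadditive _ _ _ P S F K.+1 (fun k _ => mF k) mS SF.
move=> /le_trans; apply.
rewrite big_ord_recl /= (@outside0 _ _ _ _ _ _ (hd a.+1 isT)) add0e.
have hk : forall k : 'I_K, (P (F (bump 0 k)) <= ((M * del) * (M * (3 * del)))%:E)%E.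
  move=> k; rewrite /F /= indep_pair //.
  have M0 : 0 <= M by have /andP[h1 h2] := fM 0; exact: le_trans h2.
  rewrite add0n -natr1 EFinM; apply: lee_pmul => //.
  - set u := k%:R * del.
    have hab : u <= (k%:R + 1) * del by rewrite /u; lra.
    apply: (le_trans (@itv_bound _ _ _ _ _ _ _ _ _ (hd a.+1 isT) mf fM hab)).
    by rewrite lee_fin; apply: ler_wpM2l => //; rewrite /u; lra.
  - have hab : (k%:R - 1) * del <= (k%:R + 2) * del by lra.
    apply: (le_trans (@itv_bound _ _ _ _ _ _ _ _ _ (hd b.+1 isT) mf fM hab)).
    by rewrite lee_fin; apply: ler_wpM2l => //; lra.
apply: (le_trans (y := (\sum_(i < K) ((M*del)*(M*(3*del)))%:E)%E)).
  by apply: lee_sum => k _; exact: hk k.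
by rewrite sumEFin sumr_const card_ord lee_fin [X in _ <= X]mulrC mulr_natr.
Qed.

Lemma pair_bound2 (R : realType) (d : measure_display) (T : measurableType d)
  (P : probability T R) (c : nat -> T -> R) (f : R -> R) (M : R) (i j : nat) (del : R) :
  (forall k, measurable_fun setT (c k)) ->
  mutually_independent P (fun k => c k.+1) ->
  (forall k, (1 <= k)%N -> has_density_01 P (c k) f) ->
  measurable_fun setT f ->
  (forall x, 0 <= f x <= M) -> (0 < i)%N -> (0 < j)%N -> i <> j -> 0 < del ->
  (P [set w | (`|c i w - c j w| <= del)%R] <=
    (3 * (M * M) * (del + del * del))%:E)%E.
Proof.
move=> mc hI hd mf fM.
case: i => // a; case: j => // b _ _ ab dpos.
have ab' : a <> b by move=> e; apply: ab; rewrite e.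
apply: (le_trans (@pair_bound _ _ _ _ _ _ _ _ _ _ mc hI hd mf fM ab' dpos)).
rewrite lee_fin.
have M0 : 0 <= M by have /andP[h1 h2] := fM 0; exact: le_trans h2.
have hK : (Num.truncn del^-1).+1%:R <= del^-1 + 1.
  by rewrite -natr1 lerD2r truncn_le invr_ge0 ltW.
have -> : 3 * (M * M) * (del + del * del) = (del^-1 + 1) * (M * del * (M * (3 * del))).
  by field; rewrite gt_eqF.
apply: ler_wpM2r => //.
by rewrite !mulr_ge0 // ltW.
Qed.

Definition dlt (R : realType) (m : nat) (lam : R) (n : nat) : R :=
  (m.+1)%:R * expR (- (lam * n%:R)).
Arguments dlt {R} m lam n.

Definition pairset (R : realType) (T : Type) (c : nat -> T -> R) (m : nat) (lam : R) (n i j : nat) : set T :=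
  if [&& (0 < n)%N, (n <= i)%N, (n <= j)%N & i != j]
  then [set w | `|c i w - c j w| <= dlt m lam n] else set0.
Arguments pairset {R T} c m lam n i j.

Definition rowset (R : realType) (T : Type) (c : nat -> T -> R) (m : nat) (lam : R) (n i : nat) : set T :=
  \big[setU/set0]_(j < 2 * n * n) pairset c m lam n i j.
Arguments rowset {R T} c m lam n i.

Definition bad (R : realType) (T : Type) (c : nat -> T -> R) (m : nat) (lam : R) (n : nat) : set T :=
  \big[setU/set0]_(i < 2 * n * n) rowset c m lam n i.
Arguments bad {R T} c m lam n.

Lemma pairset_meas (R : realType) (d : measure_display) (T : measurableType d)
  (c : nat -> T -> R) m lam n i j :
  (forall k, measurable_fun setT (c k)) -> measurable (pairset c m lam n i j).
Proof.
move=> mc; rewrite /pairset; case: ifP => // _.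
have -> : [set w | `|c i w - c j w| <= dlt m lam n] =
   (fun w => c i w - c j w) @^-1` `[- dlt m lam n, dlt m lam n].
  by apply/seteqP; split=> w /=; rewrite in_itv /= -ler_norml.
rewrite -[X in measurable X]setTI.
by apply: (measurable_funB (mc _) (mc _)) => //; exact: measurable_itv.
Qed.

Lemma rowset_meas (R : realType) (d : measure_display) (T : measurableType d)
  (c : nat -> T -> R) m lam n i :
  (forall k, measurable_fun setT (c k)) -> measurable (rowset c m lam n i).
Proof.
by move=> mc; apply: bigsetU_measurable => j _; exact: pairset_meas.
Qed.

Lemma bad_meas (R : realType) (d : measure_display) (T : measurableType d)
  (c : nat -> T -> R) m lam n :
  (forall k, measurable_fun setT (c k)) -> measurable (bad c m lam n).
Proof.
by move=> mc; apply: bigsetU_measurable => i _; exact: rowset_meas.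
Qed.

Lemma bad_mem (R : realType) (T : Type) (c : nat -> T -> R) m lam n i j w :
  (0 < n)%N -> (n <= i < 2 * n * n)%N -> (n <= j < 2 * n * n)%N -> i <> j ->
  `|c i w - c j w| <= dlt m lam n -> bad c m lam n w.
Proof.
move=> n0 /andP[ni iK] /andP[nj jK] ij h.
rewrite /bad -bigcup_mkord; exists i => //.
rewrite /rowset -bigcup_mkord; exists j => //.
rewrite /pairset.
have -> : [&& (0 < n)%N, (n <= i)%N, (n <= j)%N & i != j] by rewrite n0 ni nj; apply/eqP.
exact: h.
Qed.

Lemma sum_const_le (R : realType) (K : nat) (B : R) (F : 'I_K -> \bar R) :
  (forall i, F i <= B%:E)%E -> (\sum_(i < K) F i <= (K%:R * B)%:E)%E.
Proof.
move=> h; apply: (le_trans (y := (\sum_(i < K) B%:E)%E)).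
  by apply: lee_sum => i _; exact: h.
by rewrite sumEFin sumr_const card_ord lee_fin [X in _ <= X]mulrC mulr_natr.
Qed.

Lemma bad_bound (R : realType) (d : measure_display) (T : measurableType d)
  (P : probability T R) (c : nat -> T -> R) (f : R -> R) (M lam : R) (m n : nat) :
  (forall k, measurable_fun setT (c k)) ->
  mutually_independent P (fun k => c k.+1) ->
  (forall k, (1 <= k)%N -> has_density_01 P (c k) f) ->
  measurable_fun setT f ->
  (forall x, 0 <= f x <= M) ->
  (P (bad c m lam n) <= ((2 * n * n)%:R * ((2 * n * n)%:R *
      (3 * (M * M) * (dlt m lam n + dlt m lam n * dlt m lam n))))%:E)%E.
Proof.
move=> mc hI hd mf fM.
set K := (2 * n * n)%N.
set del := dlt m lam n.
have dpos : 0 < del by rewrite /del /dlt mulr_gt0 ?expR_gt0 // ltr0n.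
have B0 : 0 <= 3 * (M * M) * (del + del * del).
  have M0 : 0 <= M by have /andP[h1 h2] := fM 0; exact: le_trans h2.
  by rewrite !mulr_ge0 // ?addr_ge0 // ?mulr_ge0 // ltW.
have := @content_subadditive _ _ _ P (bad c m lam n) (rowset c m lam n) K
  (fun k _ => @rowset_meas _ _ _ c m lam n k mc) (@bad_meas _ _ _ c m lam n mc) (fun x h => h).
move=> /le_trans; apply; apply: sum_const_le => i.
have := @content_subadditive _ _ _ P (rowset c m lam n i) (pairset c m lam n i) K
  (fun k _ => @pairset_meas _ _ _ c m lam n i k mc) (@rowset_meas _ _ _ c m lam n i mc) (fun x h => h).
move=> /le_trans; apply; apply: sum_const_le => j.
rewrite /pairset; case: ifP => [/and4P[n0 ni nj ij]|_].
  apply: (@pair_bound2 _ _ _ _ _ _ _ _ _ _ mc hI hd mf fM) => //.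
  - exact: leq_trans ni.
  - exact: leq_trans nj.
  - by apply/eqP.
by rewrite measure0 lee_fin.
Qed.

Lemma geo_fin (R : realType) (C r : R) : 0 <= C -> 0 < r < 1 ->
  (\sum_(n <oo) (C * r ^+ n)%:E < +oo)%E.
Proof.
move=> C0 /andP[r0 r1].
apply: (le_lt_trans (y := (C / (1 - r))%:E)); last exact: ltry.
apply: lime_le.
  by apply: is_cvg_nneseries => n _ _; rewrite lee_fin mulr_ge0 // exprn_ge0 // ltW.
apply: nearW => n /=.
rewrite sumEFin lee_fin.
have h : series (geometric C r) n <= C / (1 - r).
  by apply: geometric_le_lim => //; rewrite ger0_norm // ltW.
move: h; by rewrite /series /geometric /=.
Qed.

Lemma poly_exp (R : realType) (lam : R) (n : nat) : 0 < lam ->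
  (n%:R ^+ 4 * expR (- (lam * n%:R)) <= 24 * (2 / lam) ^+ 4 * expR (- (lam / 2)) ^+ n).
Proof.
move=> l0.
set x := lam * n%:R / 2.
have x0 : 0 <= x by rewrite /x !mulr_ge0 // ?ltW // invr_ge0.
have hx := @expR_ge1Dxn R x 3 x0.
have hx' : x ^+ 4 <= 24 * expR x.
  have : x ^+ 4 / 24 <= expR x by move: hx; rewrite (_ : (3.+1)`!%:R = 24 :> R) //; lra.
  by rewrite ler_pdivrMr // mulrC.
have nE : n%:R = (2 / lam) * x by rewrite /x; field; rewrite gt_eqF.
have -> : expR (- (lam / 2)) ^+ n = expR x * expR (- (lam * n%:R)).
  by rewrite -expRM_natr -expRD /x; congr expR; field.
rewrite nE exprMn mulrA [X in _ <= X]mulrA.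
apply: ler_wpM2r; first exact: ltW (expR_gt0 _).
rewrite [X in _ <= X]mulrAC [24 * _]mulrC -mulrA.
have p0 : 0 <= (2 / lam) ^+ 4 by rewrite exprn_ge0 // divr_ge0 // ltW.
move: hx' p0; set a := (2 / lam) ^+ 4; set e := expR x.
rewrite !exprSr expr0 mul1r; nra.
Qed.

Lemma term_bound (R : realType) (M lam : R) (m n : nat) : 0 < lam ->
  (2 * n * n)%:R * ((2 * n * n)%:R *
      (3 * (M * M) * (dlt m lam n + dlt m lam n * dlt m lam n)))
   <= (4 * (3 * (M * M)) * ((m.+1)%:R + (m.+1)%:R ^+ 2) * (24 * (2 / lam) ^+ 4))
       * expR (- (lam / 2)) ^+ n.
Proof.
move=> l0.
have hp := @poly_exp _ lam n l0.
rewrite /dlt.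
set E := expR (- (lam * n%:R)) in hp *.
set k := (m.+1)%:R.
set r := expR (- (lam / 2)) ^+ n in hp *.
set Q := 24 * (2 / lam) ^+ 4 in hp *.
set N := n%:R in hp *.
have E0 : 0 < E by exact: expR_gt0.
have E1 : E <= 1 by rewrite /E expR_le1 oppr_le0 mulr_ge0 // ltW.
have k0 : 0 < k by rewrite ltr0n.
have N0 : 0 <= N by rewrite ler0n.
have MM : 0 <= 3 * (M * M) by rewrite mulr_ge0 // -expr2 sqr_ge0.
have h1 : k * E + k * E * (k * E) <= (k + k ^+ 2) * E.
  have : E * E <= E by rewrite -[X in _ <= X]mulr1 ler_wpM2l // ltW.
  move=> h; have h' : k * k * (E * E) <= k * k * E by rewrite ler_wpM2l // mulr_ge0 // ltW.
  rewrite expr2; lra.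
have -> : (2 * n * n)%:R = 2 * (N * N) :> R by rewrite /N !natrM mulrA.
apply: (le_trans (y := 4 * (3 * (M * M)) * (k + k ^+ 2) * (N ^+ 4 * E))).
  have -> : 4 * (3 * (M * M)) * (k + k ^+ 2) * (N ^+ 4 * E) =
     (4 * N ^+ 4) * (3 * (M * M)) * ((k + k ^+ 2) * E) by ring.
  have -> : 2 * (N * N) * (2 * (N * N) * (3 * (M * M) * (k * E + k * E * (k * E)))) =
     (4 * N ^+ 4) * (3 * (M * M)) * (k * E + k * E * (k * E)) by ring.
  apply: ler_wpM2l => //.
  by rewrite mulr_ge0 // ?exprn_ge0 // ?mulr_ge0 // ?addr_ge0 // ltW.
rewrite -[X in _ <= X]mulrA.
apply: ler_wpM2l => //.
by apply: mulr_ge0; [rewrite mulr_ge0 | rewrite addr_ge0 // ?exprn_ge0 // ltW].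
Qed.

Lemma pow_q (R : realType) (n : nat) : (2 <= n)%N -> (2 ^ qn (R:=R) n <= n)%N.
Proof.
move=> n2; rewrite /qn.
set y := ln (ln (n%:R : R)) / ln 2.
have ln2 : 0 < ln (2 : R) by apply: ln_gt0; rewrite ltr1n.
have lnn : 0 < ln (n%:R : R) by apply: ln_gt0; rewrite ltr1n.
have [y0|y0] := leP 0 y; last first.
  by rewrite truncn_floor ifN ?expn0 ?(leq_trans _ n2) // -ltNge.
have hq : (Num.truncn y)%:R <= y by rewrite truncn_le.
have h2 : (2 : R) ^+ Num.truncn y <= ln (n%:R : R).
  rewrite -[X in X ^+ _](@lnK R 2) ?posrE // -expRM_natl.
  rewrite -[X in _ <= X](@lnK R (ln n%:R)) ?posrE //.
  rewrite ler_expR.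
  have -> : ln (ln (n%:R : R)) = y * ln 2 by rewrite /y mulfVK // gt_eqF.
  by rewrite ler_pM2r.
have h3 : ln (n%:R : R) < n%:R by apply: ln_sublinear; rewrite ltr0n (leq_trans _ n2).
rewrite -(ler_nat R) natrX.
by apply: ltW; apply: le_lt_trans h3.
Qed.

Lemma inAq_range (n q i : nat) : (2 ^ q <= n)%N -> inAq n q i -> (n <= i < 2 * n * n)%N.
Proof.
move=> hq [k [kq /andP[h1 h2]]].
have hk : (2 ^ k <= 2 ^ q)%N by rewrite leq_pexp2l.
have hk1 : (1 <= 2 ^ k)%N by rewrite expn_gt0.
apply/andP; split; nia.
Qed.

Lemma lk_le (R : realType) (lam : R) (n i : nat) : 0 < lam -> (n <= i)%N ->
  lk lam i <= expR (- (lam * n%:R)).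
Proof.
move=> l0 ni; rewrite /lk ler_expR lerN2 ler_pM2l // ler_nat //.
Qed.

Theorem lemma2p2 (R : realType) (d : measure_display) (T : measurableType d)
  (P : probability T R) (c : nat -> T -> R) (f : R -> R) (M lam : R) :
  (forall k, measurable_fun setT (c k)) ->
  mutually_independent P (fun k => c k.+1) ->
  (forall k, (1 <= k)%N -> has_density_01 P (c k) f) ->
  measurable_fun setT f ->
  (forall x, 0 <= f x <= M) ->
  {ae lebesgue_measure, forall x : R, 0 <= x <= 1 -> 0 < f x} ->
  0 < lam ->
  {ae P, forall w : T, forall eps : R, 0 < eps ->
     exists N : nat, forall n : nat, (N <= n)%N ->
       forall i j : nat, inAq n (qn (R := R) n) i -> inAq n (qn (R := R) n) j ->
         i <> j ->
         (lk lam i + lk lam j) / (2 * `|c i w - c j w|) < eps /\ c i w <> c j w}.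
Proof.
move=> mc hI hd mf fM _ l0.
set r := expR (- (lam / 2)).
pose Cm (m : nat) := 4 * (3 * (M * M)) * ((m.+1)%:R + (m.+1)%:R ^+ 2) * (24 * (2 / lam) ^+ 4).
have M0 : 0 <= M by have /andP[h1 h2] := fM 0; exact: le_trans h2.
have C0 : forall m, 0 <= Cm m.
  move=> m; rewrite /Cm; apply: mulr_ge0; last first.
    by rewrite mulr_ge0 // exprn_ge0 // divr_ge0 // ltW.
  by apply: mulr_ge0; [rewrite mulr_ge0 // mulr_ge0 // -expr2 sqr_ge0 | rewrite addr_ge0 // exprn_ge0].
have r01 : 0 < r < 1.
  by rewrite expR_gt0 /= expR_lt1 oppr_lt0 divr_gt0.
have lim0 : forall m, P (lim_sup_set (bad c m lam)) = 0%E.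
  move=> m; apply: lim_sup_set_cvg0.
    by move=> n; exact: bad_meas.
  apply: le_lt_trans (@geo_fin R _ _ (C0 m) r01).
  apply: lee_nneseries => // n _.
  apply: le_trans (@bad_bound _ _ _ P c f M lam m n mc hI hd mf fM) _.
  by rewrite lee_fin; exact: term_bound.
have negl : P.-negligible (\bigcup_m lim_sup_set (bad c m lam)).
  apply: negligible_bigcup => m.
  exists (lim_sup_set (bad c m lam)); split => //; last exact: lim0.
  apply: bigcap_measurable; first by exists 0%N.
  move=> k _; apply: bigcup_measurable => j _; exact: bad_meas.
apply: negligibleS negl.
move=> w /= Hw; apply: contrapT => Hn; apply: Hw => eps eps0.
set m := Num.truncn eps^-1.
have Hm : ~ lim_sup_set (bad c m lam) w by move=> h; apply: Hn; exists m.
have [N0 HN0] : exists N0, forall n, (N0 <= n)%N -> ~ bad c m lam n w.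
  apply: contrapT => H; apply: Hm => n _; apply: contrapT => H'; apply: H.
  exists n => j nj Fj; apply: H'; exists j => //.
exists (maxn N0 2) => n hn i j hi hj ij.
have n2 : (2 <= n)%N by move: hn; rewrite geq_max => /andP[].
have nN0 : (N0 <= n)%N by move: hn; rewrite geq_max => /andP[].
have hq := @pow_q R n n2.
have ri := @inAq_range n _ i hq hi.
have rj := @inAq_range n _ j hq hj.
have dpos : 0 < dlt m lam n by rewrite /dlt mulr_gt0 ?expR_gt0 // ltr0n.
have hgt : dlt m lam n < `|c i w - c j w|.
  rewrite ltNge; apply/negP => h; apply: (HN0 n nN0).
  by apply: (@bad_mem R T c m lam n i j w) => //; rewrite (leq_trans _ n2).
have Dpos : 0 < `|c i w - c j w| by exact: lt_trans hgt.
split; last first.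
  by move=> e; move: Dpos; rewrite e subrr normr0 ltxx.
have li := @lk_le R lam n i l0 (proj1 (andP ri)).
have lj := @lk_le R lam n j l0 (proj1 (andP rj)).
have em : 1 < eps * (m.+1)%:R.
  have := truncnS_gt eps^-1; rewrite -/m => h.
  by rewrite -(ltr_pdivrMl _ _ eps0) mulr1.
rewrite ltr_pdivrMr ?mulr_gt0 //.
move: hgt; rewrite /dlt.
set E := expR (- (lam * n%:R)) in li lj *.
set D := `|c i w - c j w| in Dpos *.
set k := (m.+1)%:R in em *.
have E0 : 0 < E by exact: expR_gt0.
move=> hgt.
nra.
Qed.
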